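(* For every $n\ge 1$ with $n\neq 3$, the fan $F_n$ is distance antimagic; the fan $F_3$ is not distance antimagic.
   Context: The fan $F_n$ is obtained from a path $x_1x_2\cdots x_n$ by adding a center vertex $x_0$ adjacent to all of $x_1,\dots,x_n$; it has $n+1$ vertices. For a graph $G=(V,E)$ with $v=|V|$ and a bijection $f:V\to\{1,\dots,v\}$, the vertex-weight of $x$ is $w(x)=\sum_{y\in N(x)}f(y)$ with $N(x)$ the set of neighbours of $x$. $G$ is distance antimagic if it admits a bijection $f$ under which all vertex-weights are pairwise distinct. *)

(* Defs.v *)
From mathcomp Require Import all_boot.
Set Implicit Arguments. Unset Strict Implicit. Unset Printing Implicit Defensive.

(* Fan F_n on vertex type 'I_n.+1: vertex 0 is the centre x_0,
   vertex i (1 <= i <= n) is the path vertex x_i. *)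
Definition fan_adj (n : nat) : rel 'I_n.+1 :=
  fun i j =>
    ((i == 0 :> nat) && (j != 0 :> nat))
    || ((j == 0 :> nat) && (i != 0 :> nat))
    || [&& (i != 0 :> nat), (j != 0 :> nat) & ((i.+1 == j :> nat) || (j.+1 == i :> nat))].

Definition is_vertex_labeling (T : finType) (f : T -> nat) : Prop :=
  injective f /\ (forall x, 1 <= f x <= #|T|).

Definition vweight (T : finType) (adj : rel T) (f : T -> nat) (x : T) : nat :=
  \sum_(y : T | adj x y) f y.

Definition distance_antimagic (T : finType) (adj : rel T) : Prop :=
  exists f : T -> nat, is_vertex_labeling f /\ injective (vweight adj f).

(* Main.v *)
Require Import Defs.
From mathcomp Require Import all_boot zify.

Lemma sum_eqk m k (g : nat -> nat) :
  \sum_(i < m) (if (i:nat) == k then g i else 0) = if k < m then g k else 0.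
Proof.
elim: m => [|m IH]; first by rewrite big_ord0.
rewrite big_ord_recr /= IH.
case: ifP => h1; case: ifP => h2; case: ifP => h3; move/eqP: h2 => h2 //;
  try (subst; lia); try lia.
Qed.

Lemma fan_w_path n (g : nat -> nat) (x : 'I_n.+1) : (x:nat) != 0 ->
 vweight (@fan_adj n) (fun y : 'I_n.+1 => g y) x =
   g 0 + (if 1 < x then g x.-1 else 0) + (if x < n then g x.+1 else 0).
Proof.
move=> x0; rewrite /vweight big_mkcond /=.
rewrite (eq_bigr (fun i : 'I_n.+1 => (if (i:nat) == 0 then g i else 0)
  + (if (i:nat) == x.-1 then (if 1 < x then g i else 0) else 0)
  + (if (i:nat) == x.+1 then g i else 0))).
  rewrite !big_split /= (sum_eqk _ _ (fun i => if 1 < x then g i else 0)) !sum_eqk.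
  have -> : x.-1 < n.+1 by case: x x0 => /= x xl; lia.
  by rewrite ltnS.
move=> i _; rewrite /fan_adj /=.
move: x0; case: x => /= x xl; case: i => /= i il x0.
by repeat case: ifP => /=; try lia.
Qed.

Lemma fan_w_center n (g : nat -> nat) (x : 'I_n.+1) : (x:nat) = 0 ->
 vweight (@fan_adj n) (fun y : 'I_n.+1 => g y) x = \sum_(i < n) g i.+1.
Proof.
move=> x0; rewrite /vweight big_mkcond big_ord_recl /= /fan_adj x0 /= add0n.
apply: eq_bigr => i _. by [].
Qed.

Lemma sumS n : (\sum_(i < n) i.+1) * 2 = n * n.+1.
Proof. elim: n => [|n IH]; first by rewrite big_ord0. rewrite big_ord_recr /= mulnDl IH. lia. Qed.

Lemma sumSS n : (\sum_(i < n) i.+2) * 2 = n * n.+1 + 2 * n.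
Proof. elim: n => [|n IH]; first by rewrite big_ord0. rewrite big_ord_recr /= mulnDl IH. lia. Qed.

Lemma even_case k : 0 < k -> distance_antimagic (@fan_adj k.*2).
Proof.
move=> k0; set n := k.*2.
pose g := fun i : nat => if i == 0 then n.+1 else i.
exists (fun y : 'I_n.+1 => g y); split.
  split.
    move=> x y; rewrite /g => h; apply: val_inj; move: h.
    case: x y => [x xl] [y yl] /=; by repeat case: ifP => /=; lia.
  move=> x; rewrite card_ord /g; case: x => [x xl] /=; case: ifP => /=; lia.
move=> x y.
have E : forall z : 'I_n.+1, vweight (@fan_adj n) (fun y : 'I_n.+1 => g y) z =
  if (z:nat) == 0 then \sum_(i < n) g i.+1 else
   g 0 + (if 1 < z then g z.-1 else 0) + (if z < n then g z.+1 else 0).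
  move=> z; case: eqP => h; first by rewrite fan_w_center.
  by rewrite fan_w_path //; apply/eqP.
have C : (\sum_(i < n) g i.+1) * 2 = n * n.+1.
  by rewrite -sumS.
rewrite !E => h; apply: val_inj; move: h C.
case: x y => [x xl] [y yl] /=. rewrite /g /n.
by repeat case: ifP => /=; nia.
Qed.

Lemma odd_case k : k != 1 -> distance_antimagic (@fan_adj k.*2.+1).
Proof.
move=> k1; set n := k.*2.+1.
pose g := fun i : nat => if i == 0 then 1 else i.+1.
exists (fun y : 'I_n.+1 => g y); split.
  split.
    move=> x y; rewrite /g => h; apply: val_inj; move: h.
    case: x y => [x xl] [y yl] /=; by repeat case: ifP => /=; lia.
  move=> x; rewrite card_ord /g; case: x => [x xl] /=; case: ifP => /=; lia.
move=> x y.
have E : forall z : 'I_n.+1, vweight (@fan_adj n) (fun y : 'I_n.+1 => g y) z =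
  if (z:nat) == 0 then \sum_(i < n) g i.+1 else
   g 0 + (if 1 < z then g z.-1 else 0) + (if z < n then g z.+1 else 0).
  move=> z; case: eqP => h; first by rewrite fan_w_center.
  by rewrite fan_w_path //; apply/eqP.
have C : (\sum_(i < n) g i.+1) * 2 = n * n.+1 + 2 * n.
  by rewrite -sumSS.
rewrite !E => h; apply: val_inj; move: h C.
case: x y => [x xl] [y yl] /=. rewrite /g /n.
move: k1; by repeat case: ifP => /=; nia.
Qed.

Lemma fan3 : ~ distance_antimagic (@fan_adj 3).
Proof.
case=> f [_ inj].
have : vweight (@fan_adj 3) f (inord 1) = vweight (@fan_adj 3) f (inord 3).
  rewrite /vweight; apply: eq_bigl => y.
  case: y => [[|[|[|[|y]]]] yl] //; rewrite /fan_adj /= ?inordK //=.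
by move/inj/(congr1 (@nat_of_ord 4)); rewrite !inordK.
Qed.

Theorem mainTheorem14 :
  (forall n : nat, 1 <= n -> n != 3 -> distance_antimagic (@fan_adj n))
  /\ ~ distance_antimagic (@fan_adj 3).
Proof.
split; last exact: fan3.
move=> n n1 n3.
have [k [e|e]] : exists k, n = k.*2 \/ n = k.*2.+1.
  exists n./2; rewrite -{1 3}(odd_double_half n); case: (odd n); [right|left] => //.
- subst n; apply: even_case; move: n1 n3; lia.
- subst n; apply: odd_case; move: n3; lia.
Qed.
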